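(* Let $n$, $k$, $t$ be positive integers with $k\geq t+1$ and $n\geq 2k$, and let $V$ be an $n$-dimensional vector space over $\mathbb{F}_q$. Suppose $\mathcal{F}\subseteq{V\brack k}$ is almost $t$-intersecting and $\mathcal{B}\subseteq\mathcal{F}$. If $A$ is a $t$-cover of $\mathcal{F}\setminus\mathcal{B}$ with $\dim(A)<\tau_t(\mathcal{F})\leq k$, then there exists a subspace $A_u$ of $V$ with $A\subseteq A_u$, $\tau_t(\mathcal{F})\leq\dim(A_u)$ and $$|\mathcal{B}_A|\leq{k-t+1\brack 1}^{\dim(A_u)-\dim(A)}|\mathcal{B}_{A_u}|+\sum_{i=0}^{\tau_t(\mathcal{F})-\dim(A)-1}{k-t+1\brack 1}^{i}.$$
   Context: $q$ is a prime power; ${W\brack k}$ is the set of $k$-dimensional subspaces of $W$ and ${m\brack r}$ the Gaussian binomial coefficient $\prod_{i=0}^{r-1}\frac{q^{m-i}-1}{q^{r-i}-1}$. A family $\mathcal{F}\subseteq{V\brack k}$ is almost $t$-intersecting if for each $F\in\mathcal{F}$ there is at most one $F'\in\mathcal{F}$ with $\dim(F\cap F')<t$. A subspace $W$ is a $t$-cover of a family $\mathcal{A}$ if $\dim(W\cap F)\geq t$ for all $F\in\mathcal{A}$; $\tau_t(\mathcal{F})$ is the minimum dimension of a $t$-cover of $\mathcal{F}$. For a family $\mathcal{B}$ and subspace $A$, $\mathcal{B}_A=\{F\in\mathcal{B}: A\subseteq F\}$. *)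

(* Defs.v *)
From HB Require Import structures.
From mathcomp Require Import all_boot all_order all_algebra all_field.
From mathcomp Require Import finmap.
Set Implicit Arguments. Unset Strict Implicit. Unset Printing Implicit Defensive.
Import GRing.Theory.
Open Scope fset_scope.

Definition gauss_binom (q m r : nat) : nat :=
  (\prod_(i < r) (q ^ (m - i) - 1)) %/ (\prod_(i < r) (q ^ (r - i) - 1)).

Section Subspaces.
Variables (K : fieldType) (vT : vectType K).

Definition almost_t_intersecting (t : nat) (Fam : {fset {vspace vT}}) : Prop :=
  forall F, F \in Fam ->
    #|` [fset F' in Fam | (\dim (F :&: F')%VS < t)%N] | <= 1.

Definition t_cover (t : nat) (W : {vspace vT}) (A : {fset {vspace vT}}) : Prop :=
  forall F, F \in A -> (t <= \dim (W :&: F)%VS)%N.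

Definition is_tau (t : nat) (Fam : {fset {vspace vT}}) (m : nat) : Prop :=
  (exists W, t_cover t W Fam /\ \dim W = m) /\
  (forall W, t_cover t W Fam -> (m <= \dim W)%N).

Definition fam_containing (B : {fset {vspace vT}}) (A : {vspace vT}) :=
  [fset F in B | (A <= F)%VS].
End Subspaces.

(* Main.v *)
Require Import Defs.
From mathcomp Require Import all_boot all_order all_algebra all_field.
From mathcomp Require Import finmap zify.
Set Implicit Arguments. Unset Strict Implicit. Unset Printing Implicit Defensive.
Import GRing.Theory.
Open Scope fset_scope.
Open Scope ring_scope.

Lemma vlineZ (K : fieldType) (vT : vectType K) (a : K) (v : vT) :
  (a != 0)%R -> <[a *: v]>%VS = <[v]>%VS.
Proof.
move=> a0; apply/eqP; rewrite eqEsubv -!memvE; apply/andP; split.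
  by apply: memvZ; exact: memv_line.
rewrite {1}(_ : v = a^-1 *: (a *: v)); last by rewrite scalerA mulVf // scale1r.
by apply: memvZ; exact: memv_line.
Qed.

Lemma card_bigfcup (T : choiceType) (I : eqType) (r : seq I) (P : pred I)
  (G : I -> {fset T}) :
  (#|` \bigcup_(i <- r | P i) G i| <= \sum_(i <- r | P i) #|` G i|)%N.
Proof.
elim: r => [|x r IH]; first by rewrite !big_nil cardfs0.
rewrite !big_cons; case: (P x) => //.
rewrite cardfsU; apply: leq_trans (leq_subr _ _) _.
by rewrite leq_add2l.
Qed.

Lemma gauss1 q m : gauss_binom q m 1 = ((q ^ m - 1) %/ (q - 1))%N.
Proof. by rewrite /gauss_binom !big_ord1 /= !subn0 expn1. Qed.

Lemma step (K : finFieldType) (vT : vectType K) (k t : nat)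
  (Fam B : {fset {vspace vT}}) (A F0 : {vspace vT}) :
  almost_t_intersecting t Fam -> B `<=` Fam -> F0 \in Fam -> \dim F0 = k ->
  (\dim (A :&: F0) < t)%N -> (t <= k)%N ->
  exists A' : {vspace vT}, (A <= A')%VS /\ \dim A' = (\dim A).+1 /\
    (#|` fam_containing B A| <=
       1 + gauss_binom #|K| (k - t + 1) 1 * #|` fam_containing B A'|)%N.
Proof.
move=> Hal HB F0in dF0 dAF0 tk.
set U := (F0 :\: A)%VS.
set m := (k - t + 1)%N.
have dU : (m <= \dim U)%N.
  have h : (\dim (A :&: F0) + \dim U = k)%N.
    by rewrite -dF0 -(dimv_cap_compl F0 A) capvC.
  rewrite /m; lia.
set X := take m (vbasis U).
have freeX : free X.
  have := basis_free (vbasisP U).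
  by rewrite -(cat_take_drop m (vbasis U)) => /catl_free.
set Y := <<X>>%VS.
have dY : \dim Y = m by rewrite /Y (eqP freeX) size_takel // size_tuple.
have YU : (Y <= U)%VS.
  by apply/span_subvP => v /mem_take; apply: vbasis_mem.
have YF0 : (Y <= F0)%VS := subv_trans YU (diffvSl _ _).
have YA : forall v, v \in Y -> v \in A -> v = 0.
  move=> v vY vA; have : v \in (U :&: A)%VS by rewrite memv_cap (subvP YU).
  by rewrite capv_diff memv0 => /eqP.
have key : forall F, (t <= \dim (F0 :&: F))%N ->
    exists2 y, y != 0 & (y \in Y) && (y \in F).
  move=> F hF; have h1 := dimv_sum_cap (F0 :&: F) Y.
  have h2 : (\dim (F0 :&: F + Y) <= k)%N.
    by rewrite -dF0; apply: dimvS; rewrite subv_add capvSl YF0.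
  have h4 : (\dim (F0 :&: F) <= k)%N by rewrite -dF0; apply: dimvS; apply: capvSl.
  have h3 : (0 < \dim ((F0 :&: F) :&: Y))%N by rewrite dY /m in h1; lia.
  exists (vpick ((F0 :&: F) :&: Y)).
    by rewrite vpick0 -dimv_eq0 -lt0n.
  have := memv_pick ((F0 :&: F) :&: Y); rewrite !memv_cap.
  by case/andP => /andP[_ ->] ->.
set d := \dim Y.
pose bY := vbasis Y.
pose f (w : 'rV[K]_d) : vT := \sum_(i < d) w 0 i *: bY`_i.
have fY : forall w, f w \in Y.
  move=> w; apply: memv_suml => i _; apply: memvZ; apply: vbasis_mem.
  by apply: mem_nth; rewrite size_tuple.
have fZ : forall a w, f (a *: w) = a *: f w.
  by move=> a w; rewrite /f scaler_sumr; apply: eq_bigr => i _; rewrite mxE scalerA.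
have f0 : f 0 = 0 by rewrite /f big1 // => i _; rewrite mxE scale0r.
have fsurj : forall y, y \in Y -> exists w, f w = y.
  move=> y yY; exists (\row_i coord bY i y).
  have yS : y \in span bY by rewrite (span_basis (vbasisP Y)).
  rewrite [RHS](coord_span yS) /f; apply: eq_bigr => i _; by rewrite mxE.
pose D := [set w : 'rV[K]_d | f w != 0].
pose rep (P : {vspace vT}) : 'rV[K]_d :=
  odflt 0 [pick w in D | (<[f w]>%VS == P)].
have repP : forall w, w \in D ->
    (rep <[f w]>%VS \in D) /\ <[f (rep <[f w]>%VS)]>%VS = <[f w]>%VS.
  move=> w wD; rewrite /rep; case: pickP => [w' /andP[w'D /eqP e]|/(_ w)] //=.
  by rewrite wD eqxx.
pose R := [set w in D | rep <[f w]>%VS == w].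
have repR : forall w, w \in D ->
    (rep <[f w]>%VS \in R) /\ <[f (rep <[f w]>%VS)]>%VS = <[f w]>%VS.
  move=> w wD; have [h1 h2] := repP w wD; split => //.
  by rewrite inE h1 h2 eqxx.
have [w0 w0R] : exists w0, w0 \in R.
  have yY := memv_pick Y; have [w fw] := fsurj _ yY.
  have wD : w \in D by rewrite inE fw vpick0 -dimv_eq0 dY /m addn1.
  by exists (rep <[f w]>%VS); exact: (repR w wD).1.
pose g w := #|` fam_containing B (A + <[f w]>)%VS|.
have [ws wsR wsmax] : exists2 ws, ws \in R & forall w, w \in R -> (g w <= g ws)%N.
  by case: (@arg_maxnP _ w0 (mem R) g w0R) => ws; exists ws.
have fwsY := fY ws.
have fws0 : f ws != 0 by move: wsR; rewrite !inE => /andP[].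
exists (A + <[f ws]>)%VS; split; first exact: addvSl.
split.
  rewrite dimv_disjoint_sum ?dim_vline ?fws0 ?addn1 //.
  apply/eqP; rewrite -subv0; apply/subvP => z /memv_capP [zA /vlineP [c zc]].
  rewrite memv0; apply/eqP; apply: YA => //.
  by rewrite zc; apply: memvZ.
have q1 : (1 < #|K|)%N.
  by apply/card_gt1P; exists 0, 1; split => //; rewrite eq_sym oner_neq0.
have cntR : (#|R| * (#|K| - 1) <= #|K| ^ d - 1)%N.
  pose h (p : 'rV[K]_d * K) := p.2 *: p.1.
  have Rf : forall w, w \in R -> f w != 0 by move=> w; rewrite !inE => /andP[].
  have hinj : {in setX R [set~ 0] &, injective h}.
    move=> [w a] [w' b]; rewrite !in_setX => /andP[wR a0] /andP[w'R b0]; rewrite /h /= => e.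
    rewrite !in_setC1 in a0 b0.
    have el : <[f w]>%VS = <[f w']>%VS.
      by rewrite -(vlineZ (f w) a0) -(vlineZ (f w') b0) -!fZ e.
    have ww' : w = w'.
      by move: wR w'R; rewrite !inE el => /andP[_ /eqP e1] /andP[_ /eqP e2]; rewrite -e1; exact: e2.
    subst w'; have : (a - b) *: w = 0 by rewrite scalerBl e subrr.
    move/eqP; rewrite scaler_eq0 subr_eq0 => /orP[/eqP -> // | /eqP w0'].
    by move: (Rf w wR); rewrite w0' f0 eqxx.
  have sub : h @: setX R [set~ 0] \subset [set~ 0].
    apply/subsetP => y /imsetP [[w a]]; rewrite in_setX => /andP[wR a0] ->.
    rewrite !in_setC1 in a0 *; apply/eqP => e.
    have := congr1 f e; rewrite /h /= fZ f0 => /eqP; rewrite scaler_eq0.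
    by rewrite (negbTE a0) (negbTE (Rf w wR)).
  have := subset_leq_card sub.
  by rewrite card_in_imset // cardsX !cardsC1 card_mx mul1n !subn1.
have cR : (#|R| <= gauss_binom #|K| m 1)%N.
  by rewrite gauss1 leq_divRL ?subn_gt0 // -dY.
pose E := [fset F' in Fam | (\dim (F0 :&: F') < t)%N].
have cover : fam_containing B A `<=`
    E `|` \bigcup_(w in R) fam_containing B (A + <[f w]>)%VS.
  apply/fsubsetP => F; rewrite !inE => /andP[FB AF].
  case: (ltnP (\dim (F0 :&: F)) t) => hF.
    by rewrite (fsubsetP HB F FB) ?hF.
  have [y y0 /andP[yY yF]] := key F hF.
  have [w fw] := fsurj y yY.
  have wD : w \in D by rewrite inE fw.
  have [wR we] := repR w wD.
  apply/orP; right; apply/bigfcupP; exists (rep <[f w]>%VS).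
    by rewrite mem_index_enum wR.
  by rewrite !inE FB /= subv_add AF we -memvE fw yF.
have c1 := fsubset_leq_card cover.
have c2 := leq_subr (#|` E `&` \bigcup_(w in R) fam_containing B (A + <[f w]>)%VS|)
   (#|` E| + #|` \bigcup_(w in R) fam_containing B (A + <[f w]>)%VS|).
rewrite -cardfsU in c2.
have c3 : (#|` E| <= 1)%N := Hal F0 F0in.
have c4 : (#|` \bigcup_(w in R) fam_containing B (A + <[f w]>)%VS| <=
   \sum_(w in R) g w)%N := card_bigfcup _ _ _.
have c5 : (\sum_(w in R) g w <= #|R| * g ws)%N.
  by rewrite -sum_nat_const; apply: leq_sum => w wR; apply: wsmax.
have c6 : (#|R| * g ws <= gauss_binom #|K| m 1 * g ws)%N := leq_mul cR (leqnn _).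
rewrite -/(g ws); lia.
Qed.

Lemma ind (K : finFieldType) (vT : vectType K) (k t : nat)
  (Fam B : {fset {vspace vT}}) (tau : nat) :
  (forall F, F \in Fam -> \dim F = k) ->
  almost_t_intersecting t Fam -> B `<=` Fam -> (t <= k)%N ->
  is_tau t Fam tau ->
  forall d (A : {vspace vT}), (tau - \dim A <= d)%N -> t_cover t A (Fam `\` B) ->
  exists Au : {vspace vT},
    (A <= Au)%VS /\ (tau <= \dim Au)%N /\
    (#|` fam_containing B A| <=
       (gauss_binom #|K| (k - t + 1) 1) ^ (\dim Au - \dim A) * #|` fam_containing B Au|
       + \sum_(0 <= i < tau - \dim A) (gauss_binom #|K| (k - t + 1) 1) ^ i)%N.
Proof.
move=> Hk Hal HB tk [_ Htau] d; elim: d => [|d IH] A hd hA;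
  (case: (leqP tau (\dim A)) => hAt;
  [exists A; split; first exact: subvv; split => //;
   rewrite (_ : (tau - \dim A = 0)%N);
   [by rewrite subnn expn0 mul1n big_geq // addn0 | lia] | ]).
  lia.
have [F0 F0in dF0A] : exists2 F0, F0 \in Fam & (\dim (A :&: F0) < t)%N.
  case: (boolP (all (fun F => t <= \dim (A :&: F))%N Fam)) => [/allP hall|].
    have : (tau <= \dim A)%N by apply: Htau => F FF; apply: hall.
    by rewrite leqNgt hAt.
  by case/allPn => F FF; rewrite -ltnNge => h; exists F.
have [A' [AA' [dA' hb]]] := step Hal HB F0in (Hk F0 F0in) dF0A tk.
have hA' : t_cover t A' (Fam `\` B).
  move=> F /hA h; apply: leq_trans h _; apply: dimvS; exact: capvS AA' (subvv F).
have [Au [A'Au [tAu hb']]] := IH A' ltac:(lia) hA'.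
exists Au; split; first exact: subv_trans AA' A'Au.
split => //.
have dAu := dimvS A'Au.
set c := gauss_binom #|K| (k - t + 1) 1 in hb hb' *.
have e1 : (\dim Au - \dim A = (\dim Au - \dim A').+1)%N by lia.
have e2 : (tau - \dim A = (tau - \dim A').+1)%N by lia.
rewrite e1 e2 big_nat_recl // expnS expn0.
under eq_bigr do rewrite expnS.
rewrite -big_distrr /=.
have := leq_mul (leqnn c) hb'; rewrite mulnDr mulnA => h.
by apply: leq_trans hb _; rewrite addnCA leq_add2l.
Qed.

Close Scope ring_scope.

Theorem proposition3p3 (K : finFieldType) (q : nat) (vT : vectType K)
    (n k t : nat) (Fam B : {fset {vspace vT}}) (A : {vspace vT}) (tau : nat) :
  #|K| = q -> \dim (@fullv K vT) = n ->
  (0 < t)%N -> (t + 1 <= k)%N -> (2 * k <= n)%N ->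
  (forall F, F \in Fam -> \dim F = k) ->
  almost_t_intersecting t Fam ->
  B `<=` Fam ->
  t_cover t A (Fam `\` B) ->
  is_tau t Fam tau ->
  (\dim A < tau)%N -> (tau <= k)%N ->
  exists Au : {vspace vT},
    (A <= Au)%VS /\ (tau <= \dim Au)%N /\
    (#|` fam_containing B A| <=
       (gauss_binom q (k - t + 1) 1) ^ (\dim Au - \dim A) * #|` fam_containing B Au|
       + \sum_(0 <= i < tau - \dim A) (gauss_binom q (k - t + 1) 1) ^ i)%N.
Proof.
move=> <- _ _ tk _ Hk Hal HB hA Htau _ _.
have tk' : (t <= k)%N by apply: leq_trans tk; rewrite leq_addr.
exact: (@ind K vT k t Fam B tau Hk Hal HB tk' Htau (tau - \dim A) A (leqnn _) hA).
Qed.
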